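(* Let $\mathcal D$ be a $k$-oriented Spherical Diagram. If two arcs $a,b\in\mathcal D$ that do not lie on a common great circle have a common vanishing point, then the great circle containing $a$ does not intersect $b$, and the great circle containing $b$ does not intersect $a$.
   Context: A geodesic arc on the unit sphere in $\mathbb R^3$ is the unique shortest curve joining two non-antipodal points. An arc $a$ blocks an arc $b$ (equivalently, $b$ hits $a$) if an endpoint of $b$ lies in the relative interior of $a$. A Spherical Diagram (SD) is a finite non-empty collection $\mathcal D$ of pairwise interior-disjoint geodesic arcs on the unit sphere such that each arc of $\mathcal D$ is blocked by arcs of $\mathcal D$ at each of its endpoints. An SD $\mathcal D$ is $k$-oriented if there exist a set $P$ of $k$ points on the unit sphere (poles), no two antipodal, and a function $f\colon\mathcal D\to P$ such that each arc $a\in\mathcal D$ lies on a great circle through $f(a)$ but contains neither $f(a)$ nor its antipode $-f(a)$. The two points $f(a)$ and $-f(a)$ are the vanishing points of $a$. *)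

(* Defs.v *)
From HB Require Import structures.
From mathcomp Require Import all_boot all_order all_algebra.
From mathcomp Require Import reals.
Set Implicit Arguments. Unset Strict Implicit. Unset Printing Implicit Defensive.
Import Order.TTheory GRing.Theory Num.Theory.
Local Open Scope ring_scope.

Section Sphere.
Variable R : realType.

Definition vec := 'rV[R]_3.

Definition dot (u v : vec) : R := \sum_(i < 3) u 0 i * v 0 i.

Definition on_sphere (x : vec) : Prop := dot x x = 1.

Record garc := GArc { ep1 : vec; ep2 : vec }.

Definition valid_arc (a : garc) : Prop :=
  [/\ on_sphere (ep1 a), on_sphere (ep2 a), ep1 a <> ep2 a & ep1 a <> - ep2 a].

(* points of the (closed) shortest geodesic garc joining the endpoints:
   unit vectors in the closed cone spanned by the two endpoints *)
Definition in_arc (a : garc) (x : vec) : Prop :=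
  on_sphere x /\
  exists al be : R, [/\ 0 <= al, 0 <= be & x = al *: ep1 a + be *: ep2 a].

Definition in_relint (a : garc) (x : vec) : Prop :=
  on_sphere x /\
  exists al be : R, [/\ 0 < al, 0 < be & x = al *: ep1 a + be *: ep2 a].

(* the great circle containing the garc (its endpoints are linearly independent) *)
Definition in_circle_of (a : garc) (x : vec) : Prop :=
  on_sphere x /\ exists al be : R, x = al *: ep1 a + be *: ep2 a.

Definition on_great_circle (n x : vec) : Prop := on_sphere x /\ dot n x = 0.

Definition arc_on_circle (n : vec) (a : garc) : Prop :=
  n <> 0 /\ forall x, in_arc a x -> on_great_circle n x.

Definition blocks (a b : garc) : Prop := in_relint a (ep1 b) \/ in_relint a (ep2 b).

(* A spherical diagram, given as a nonempty finite family of arcs indexed by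
   the finite type I (distinct indices give distinct arcs, since relative
   interiors are nonempty and must be disjoint). *)
Definition spherical_diagram (I : finType) (D : I -> garc) : Prop :=
  [/\ 0 < #|I|,
      forall i, valid_arc (D i),
      forall i j, i <> j -> forall x, in_relint (D i) x -> ~ in_relint (D j) x,
      forall i, exists j, in_relint (D j) (ep1 (D i))
    & forall i, exists j, in_relint (D j) (ep2 (D i))]%N.

Definition orientation (I : finType) (D : I -> garc) (k : nat)
    (P : seq vec) (f : I -> vec) : Prop :=
  [/\ size P = k /\ uniq P,
      forall p, p \in P -> on_sphere p,
      forall p q, p \in P -> q \in P -> p <> - q,
      forall i, f i \in P
    & forall i, [/\ exists n, arc_on_circle n (D i) /\ on_great_circle n (f i),
                    ~ in_arc (D i) (f i) & ~ in_arc (D i) (- f i)]].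

Definition k_oriented (I : finType) (D : I -> garc) (k : nat) : Prop :=
  exists P f, orientation D k P f.

Definition vanishing (I : finType) (f : I -> vec) (i : I) (x : vec) : Prop :=
  x = f i \/ x = - f i.

End Sphere.

(* Main.v *)
Require Import Defs.
From HB Require Import structures.
From mathcomp Require Import all_boot all_order all_algebra reals.
From mathcomp Require Import ring lra.
Import Order.TTheory GRing.Theory Num.Theory.
Local Open Scope ring_scope.

Lemma sq0 (R : realFieldType) (w0 w1 w2 : R) : w0 * w0 + w1 * w1 + w2 * w2 = 0 ->
  [/\ w0 = 0, w1 = 0 & w2 = 0].
Proof.
move=> h.
have h0 : w0 * w0 = 0 by nra.
have h1 : w1 * w1 = 0 by nra.
have h2 : w2 * w2 = 0 by nra.
by move: h0 h1 h2 => /eqP; rewrite mulf_eq0 orbb => /eqP -> /eqP;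
  rewrite mulf_eq0 orbb => /eqP -> /eqP; rewrite mulf_eq0 orbb => /eqP ->.
Qed.

Lemma alg (R : realFieldType) (x0 x1 x2 p0 p1 p2 a0 a1 a2 b0 b1 b2 : R) :
  x0 * x0 + x1 * x1 + x2 * x2 = 1 -> p0 * p0 + p1 * p1 + p2 * p2 = 1 ->
  a0 * x0 + a1 * x1 + a2 * x2 = 0 -> a0 * p0 + a1 * p1 + a2 * p2 = 0 ->
  b0 * x0 + b1 * x1 + b2 * x2 = 0 -> b0 * p0 + b1 * p1 + b2 * p2 = 0 ->
  ~ [/\ b0 = 0, b1 = 0 & b2 = 0] ->
  (exists s, [/\ s * s = 1, x0 = s * p0, x1 = s * p1 & x2 = s * p2]) \/
  (forall y0 y1 y2, b0 * y0 + b1 * y1 + b2 * y2 = 0 -> a0 * y0 + a1 * y1 + a2 * y2 = 0).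
Proof.
move=> hx hp hxa hpa hxb hpb hb.
set w0 := x1 * p2 - x2 * p1.
set w1 := x2 * p0 - x0 * p2.
set w2 := x0 * p1 - x1 * p0.
case: (eqVneq (w0 * w0 + w1 * w1 + w2 * w2) 0) => hW.
  case: (@sq0 _ _ _ _ hW) => e0 e1 e2.
  left; exists (x0 * p0 + x1 * p1 + x2 * p2).
  have E0 : x0 * (p0 * p0 + p1 * p1 + p2 * p2) - (x0 * p0 + x1 * p1 + x2 * p2) * p0
     = - (w1 * p2 - w2 * p1) by rewrite /w1 /w2; ring.
  have E1 : x1 * (p0 * p0 + p1 * p1 + p2 * p2) - (x0 * p0 + x1 * p1 + x2 * p2) * p1
     = - (w2 * p0 - w0 * p2) by rewrite /w0 /w2; ring.
  have E2 : x2 * (p0 * p0 + p1 * p1 + p2 * p2) - (x0 * p0 + x1 * p1 + x2 * p2) * p2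
     = - (w0 * p1 - w1 * p0) by rewrite /w0 /w1; ring.
  rewrite hp e0 e1 e2 in E0 E1 E2.
  have f0 : x0 = (x0 * p0 + x1 * p1 + x2 * p2) * p0 by lra.
  have f1 : x1 = (x0 * p0 + x1 * p1 + x2 * p2) * p1 by lra.
  have f2 : x2 = (x0 * p0 + x1 * p1 + x2 * p2) * p2 by lra.
  move: (x0 * p0 + x1 * p1 + x2 * p2) f0 f1 f2 => s f0 f1 f2.
  split => //.
  rewrite f0 f1 f2 in hx.
  have : s * s * (p0 * p0 + p1 * p1 + p2 * p2) = 1 by rewrite -hx; ring.
  by rewrite hp mulr1.
right.
have Ea : forall c0 c1 c2 : R,
  c0 * x0 + c1 * x1 + c2 * x2 = 0 -> c0 * p0 + c1 * p1 + c2 * p2 = 0 ->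
  [/\ (w0 * w0 + w1 * w1 + w2 * w2) * c0 - (c0 * w0 + c1 * w1 + c2 * w2) * w0 = 0,
      (w0 * w0 + w1 * w1 + w2 * w2) * c1 - (c0 * w0 + c1 * w1 + c2 * w2) * w1 = 0 &
      (w0 * w0 + w1 * w1 + w2 * w2) * c2 - (c0 * w0 + c1 * w1 + c2 * w2) * w2 = 0].
  move=> c0 c1 c2 hcx hcp.
  have E0 : (w0 * w0 + w1 * w1 + w2 * w2) * c0 - (c0 * w0 + c1 * w1 + c2 * w2) * w0
   = (c0 * x0 + c1 * x1 + c2 * x2) * (p1 * w2 - p2 * w1)
     - (c0 * p0 + c1 * p1 + c2 * p2) * (x1 * w2 - x2 * w1).
    rewrite /w0 /w1 /w2; clear. ring.
  have E1 : (w0 * w0 + w1 * w1 + w2 * w2) * c1 - (c0 * w0 + c1 * w1 + c2 * w2) * w1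
   = (c0 * x0 + c1 * x1 + c2 * x2) * (p2 * w0 - p0 * w2)
     - (c0 * p0 + c1 * p1 + c2 * p2) * (x2 * w0 - x0 * w2).
    rewrite /w0 /w1 /w2; clear. ring.
  have E2 : (w0 * w0 + w1 * w1 + w2 * w2) * c2 - (c0 * w0 + c1 * w1 + c2 * w2) * w2
   = (c0 * x0 + c1 * x1 + c2 * x2) * (p0 * w1 - p1 * w0)
     - (c0 * p0 + c1 * p1 + c2 * p2) * (x0 * w1 - x1 * w0).
    rewrite /w0 /w1 /w2; clear. ring.
  by rewrite E0 E1 E2 hcx hcp !mul0r subrr.
case: (Ea _ _ _ hxa hpa) => A0 A1 A2.
case: (Ea _ _ _ hxb hpb) => B0 B1 B2.
clear Ea; clearbody w0 w1 w2.
move: (w0 * w0 + w1 * w1 + w2 * w2) hW A0 A1 A2 B0 B1 B2 => W hW A0 A1 A2 B0 B1 B2.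
move: (a0 * w0 + a1 * w1 + a2 * w2) A0 A1 A2 => aw A0 A1 A2.
move: (b0 * w0 + b1 * w1 + b2 * w2) B0 B1 B2 => bw B0 B1 B2.
have bw0 : bw != 0.
  apply/eqP => bwe; apply: hb.
  rewrite bwe !mul0r !subr0 in B0 B1 B2.
  have z : forall c : R, W * c = 0 -> c = 0.
    by move=> c /eqP; rewrite mulf_eq0 (negbTE hW) /= => /eqP.
  by split; apply: z.
move=> y0 y1 y2 hby.
have KB : W * (b0 * y0 + b1 * y1 + b2 * y2) - bw * (w0 * y0 + w1 * y1 + w2 * y2) =
  (W * b0 - bw * w0) * y0 + (W * b1 - bw * w1) * y1 + (W * b2 - bw * w2) * y2 by ring.
have KA : W * (a0 * y0 + a1 * y1 + a2 * y2) - aw * (w0 * y0 + w1 * y1 + w2 * y2) =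
  (W * a0 - aw * w0) * y0 + (W * a1 - aw * w1) * y1 + (W * a2 - aw * w2) * y2 by ring.
rewrite B0 B1 B2 hby mulr0 !mul0r !addr0 sub0r in KB.
have wy : w0 * y0 + w1 * y1 + w2 * y2 = 0.
  by move/eqP: KB; rewrite oppr_eq0 mulf_eq0 (negbTE bw0) /= => /eqP.
rewrite A0 A1 A2 wy mulr0 !mul0r !addr0 subr0 in KA.
by move/eqP: KA; rewrite mulf_eq0 (negbTE hW) /= => /eqP.
Qed.

Definition o0 : 'I_3 := @Ordinal 3 0 isT.
Definition o1 : 'I_3 := @Ordinal 3 1 isT.
Definition o2 : 'I_3 := @Ordinal 3 2 isT.

Lemma dotE (R : realType) (u v : vec R) :
  dot u v = u 0 o0 * v 0 o0 + u 0 o1 * v 0 o1 + u 0 o2 * v 0 o2.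
Proof.
rewrite /dot !big_ord_recl big_ord0 addr0 addrA.
have -> : (lift ord0 (lift ord0 ord0) : 'I_3) = o2 by apply: val_inj.
have -> : (lift ord0 ord0 : 'I_3) = o1 by apply: val_inj.
by have -> : (ord0 : 'I_3) = o0 by apply: val_inj.
Qed.

Lemma vec_eq (R : realType) (u v : vec R) :
  u 0 o0 = v 0 o0 -> u 0 o1 = v 0 o1 -> u 0 o2 = v 0 o2 -> u = v.
Proof.
move=> h0 h1 h2; apply/rowP => i; case: i => [[|[|[|//]]] Hi].
- by have -> : Ordinal Hi = o0 by apply: val_inj.
- by have -> : Ordinal Hi = o1 by apply: val_inj.
- by have -> : Ordinal Hi = o2 by apply: val_inj.
Qed.

Lemma dotN (R : realType) (u v : vec R) : dot u (- v) = - dot u v.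
Proof. rewrite !dotE !mxE; ring. Qed.

Lemma sphN (R : realType) (v : vec R) : on_sphere (- v) -> on_sphere v.
Proof. by rewrite /on_sphere !dotE !mxE; move=> <-; ring. Qed.

Lemma part (R : realType) (A B : garc R) na nb p :
  valid_arc A -> arc_on_circle na A -> arc_on_circle nb B ->
  dot na p = 0 -> dot nb p = 0 -> on_sphere p ->
  ~ in_arc B p -> ~ in_arc B (- p) ->
  ~ (exists n, arc_on_circle n A /\ arc_on_circle n B) ->
  forall x, in_arc B x -> ~ in_circle_of A x.
Proof.
move=> [s1 s2 _ _] [naNZ HA] [nbNZ HB] hap hbp sp nBp nBmp nex x xB [sx [al [be xE]]].
have h1 : in_arc A (ep1 A).
  split=> //; exists 1, 0; split; rewrite ?ler01 ?lexx //.
  by rewrite scale1r scale0r addr0.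
have h2 : in_arc A (ep2 A).
  split=> //; exists 0, 1; split; rewrite ?ler01 ?lexx //.
  by rewrite scale1r scale0r add0r.
have da1 := (HA _ h1).2.
have da2 := (HA _ h2).2.
have dax : dot na x = 0.
  have -> : dot na x = al * dot na (ep1 A) + be * dot na (ep2 A).
    by rewrite xE !dotE !mxE; ring.
  by rewrite da1 da2 !mulr0 addr0.
have dbx := (HB _ xB).2.
have nb' : ~ [/\ nb 0 o0 = 0, nb 0 o1 = 0 & nb 0 o2 = 0].
  by case=> e0 e1 e2; apply: nbNZ; apply: vec_eq; rewrite mxE.
rewrite /on_sphere !dotE in sx sp.
rewrite !dotE in dax hap dbx hbp.
case: (@alg _ _ _ _ _ _ _ _ _ _ _ _ _ sx sp dax hap dbx hbp nb') => [[s [ss e0 e1 e2]]|H].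
  have : (s - 1) * (s + 1) = 0 by nra.
  move/eqP; rewrite mulf_eq0 => /orP [|] /eqP hs.
    apply: nBp; have -> : p = x; last by [].
    have s1' : s = 1 by lra.
    by apply: vec_eq; rewrite ?e0 ?e1 ?e2 s1' !mul1r.
  apply: nBmp; have -> : - p = x; last by [].
  have s1' : s = -1 by lra.
  by apply: vec_eq; rewrite ?e0 ?e1 ?e2 s1' !mxE !mulN1r.
apply: nex; exists na; split; first by split.
split=> // y yB; have [sy dy] := HB y yB; split=> //.
rewrite dotE in dy; rewrite dotE; exact: H.
Qed.

Theorem mainTheorem9 (R : realType) (I : finType) (D : I -> garc R) (k : nat)
    (P : seq (vec R)) (f : I -> vec R) (a b : I) :
  spherical_diagram D ->
  orientation D k P f ->
  ~ (exists n : vec R, arc_on_circle n (D a) /\ arc_on_circle n (D b)) ->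
  (exists x, vanishing f a x /\ vanishing f b x) ->
  (forall x, in_arc (D b) x -> ~ in_circle_of (D a) x) /\
  (forall x, in_arc (D a) x -> ~ in_circle_of (D b) x).
Proof.
move=> [_ valid _ _ _] [_ _ _ _ Hf] nex [p [va vb]].
have [[na [Ca [sfa ha]]] nfa nmfa] := Hf a.
have [[nb [Cb [sfb hb]]] nfb nmfb] := Hf b.
have hap : dot na p = 0 by case: va => ->; rewrite ?dotN ha ?oppr0.
have hbp : dot nb p = 0 by case: vb => ->; rewrite ?dotN hb ?oppr0.
have sp : on_sphere p by case: va => -> //; apply: sphN; rewrite opprK.
have nbp : ~ in_arc (D b) p /\ ~ in_arc (D b) (- p).
  by case: vb => ->; rewrite ?opprK.
have nap : ~ in_arc (D a) p /\ ~ in_arc (D a) (- p).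
  by case: va => ->; rewrite ?opprK.
split.
  exact: (@part _ _ _ _ _ _ (valid a) Ca Cb hap hbp sp nbp.1 nbp.2 nex).
apply: (@part _ _ _ _ _ _ (valid b) Cb Ca hbp hap sp nap.1 nap.2).
by case=> n [h1 h2]; apply: nex; exists n.
Qed.
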